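(* Let $(G,Y)$ be a finite $C$-group. Then the commutator subgroup $[G,G]$ is finite. Moreover, each $g\in[G,G]$ can be written in the form $g=c^{-1}\prod_{i=1}^m y_{i,1}^{k_ip_i}y_{i,1}^{a_{i,1}}y_{i,2}^{a_{i,2}}\cdots y_{i,n_i}^{a_{i,n_i}}$, where $c$ is the canonical element of $G$ and the integers $k_i,a_{i,j}$ satisfy $\sum_{j=1}^{n_i}a_{i,j}+k_ip_i=n_ip_i$, $0<a_{i,j}\le p_i$ and $0\le k_i<n_i$.
   Context: A finite $C$-group is a pair $(G,Y)$ with $Y$ a finite conjugation-invariant subset of the group $G$, $1\notin Y$, such that $G$ has a presentation with generators the elements of $Y$ and defining relations all of the form $z^{-1}yz=y'$ ($y,y',z\in Y$). Write $Y=C_1\sqcup\dots\sqcup C_m$ for the decomposition into conjugacy classes of $G$, with enumerations $C_i=\{y_{i,1},\dots,y_{i,n_i}\}$; $p_i$ is the least $p\ge1$ such that $y^p$ is central in $G$ for $y\in C_i$ (independent of $y\in C_i$). The canonical element of $G$ is $c=\prod_{i=1}^m\prod_{j=1}^{n_i}y_{i,j}^{p_i}$. *)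

(* Defs.v *)
From mathcomp Require Import all_boot.
From mathcomp Require Export monoid.

Set Implicit Arguments.
Unset Strict Implicit.
Unset Printing Implicit Defensive.

Global Open Scope group_scope.

Section CGroupDefs.
Variable G : groupType.

Definition central (x : G) : Prop := forall g : G, x * g = g * x.

Definition is_subgroup (S : G -> Prop) : Prop :=
  S 1 /\ (forall x z, S x -> S z -> S (x * z^-1)).

Definition in_generated (A : G -> Prop) (g : G) : Prop :=
  forall S : G -> Prop, is_subgroup S -> (forall x, A x -> S x) -> S g.

Definition in_commutator_subgroup (g : G) : Prop :=
  in_generated (fun c => exists x z : G, c = [~ x, z]) g.

Definition finite_subset (A : G -> Prop) : Prop :=
  exists s : seq G, forall g, A g -> g \in s.

(* (G, Y) with Y = { y i j } has a presentation with generators Y and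
   defining relations z^-1 y z = y' (y, y', z in Y): Y generates G, and
   G satisfies the universal property of the group presented by all the
   relations z^-1 y z = y' valid in G. *)
Definition conj_presentation (m : nat) (n : 'I_m -> nat)
    (y : forall i : 'I_m, 'I_(n i) -> G) : Prop :=
  (forall g : G, in_generated (fun x => exists i j, x = y i j) g) /\
  (forall (H : groupType) (f : G -> H),
      (forall i1 j1 i2 j2, f (y i1 j1 ^ y i2 j2) = f (y i1 j1) ^ f (y i2 j2)) ->
      exists phi : G -> H,
        (forall a b : G, phi (a * b) = phi a * phi b) /\
        (forall i j, phi (y i j) = f (y i j))).

Definition canonical_element (m : nat) (n : 'I_m -> nat)
    (y : forall i : 'I_m, 'I_(n i) -> G) (p : 'I_m -> nat) : G :=
  \prod_(i < m) \prod_(j < n i) (y i j ^+ p i).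

End CGroupDefs.

(* Main.v *)
From HB Require Import structures.
Require Import Defs.
From mathcomp Require Import all_boot.
From mathcomp Require Import monoid.
From mathcomp Require Import ssralg ssrint.
From mathcomp Require Import zify.

Section Word.
Variables (G : groupType) (k : nat) (z : nat -> G).
Hypothesis Hz : forall j t, j < k -> t < k -> exists2 j', j' < k & z j ^ z t = z j'.

Definition pw (s : seq nat) : G := \prod_(t <- s) z t.

Definition wk (g : G) (l : nat) : Prop :=
  exists s, [/\ size s = l, all (fun t => t < k) s & g = pw s].

Lemma wk1 : wk 1 0. Proof. by exists [::]; rewrite /pw big_nil. Qed.

Lemma wkM g1 l1 g2 l2 : wk g1 l1 -> wk g2 l2 -> wk (g1 * g2) (l1 + l2).
Proof.
case=> s1 [<- a1 ->] [s2 [<- a2 ->]]; exists (s1 ++ s2).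
by rewrite size_cat all_cat a1 a2 /pw big_cat.
Qed.

Lemma wkz j : j < k -> wk (z j) 1.
Proof. by move=> hj; exists [:: j]; rewrite /pw big_seq1 /= hj. Qed.

Lemma wkX j e : j < k -> wk (z j ^+ e) e.
Proof.
move=> hj; elim: e => [|e IH]; first by rewrite expg0; apply: wk1.
by rewrite expgS -add1n; apply: wkM => //; apply: wkz.
Qed.

Lemma wk_prod (E : nat -> nat) a b : b <= k ->
  wk (\prod_(a <= j < b) z j ^+ E j) (\sum_(a <= j < b) E j).
Proof.
move=> hb; rewrite [in X in wk X _]big_nat_cond [in X in wk _ X]big_nat_cond.
elim/big_rec2: _ => [|i g l]; first exact: wk1; move=> /andP[/andP[_ hi] _] H; apply: wkM => //.
by apply: wkX; apply: leq_trans hb.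
Qed.

Lemma wk_conj g l t : t < k -> wk g l -> wk (g ^ z t) l.
Proof.
move=> ht [s [<- a ->]]; elim: s a => [|j s IH] /=.
  by move=> _; rewrite /pw big_nil conj1g; apply: wk1.
case/andP=> hj a; rewrite /pw big_cons conjMg -add1n; apply: wkM; last exact: IH.
by case: (Hz _ _ hj ht) => j' hj' ->; apply: wkz.
Qed.

Definition Qz (E : nat -> nat) := \prod_(0 <= j < k) z j ^+ E j.
Definition upd (E : nat -> nat) b := fun j => if j < b then E j else if j == b then (E b).+1 else 0.

Lemma step E b : b < k ->
  exists2 g1, wk g1 (\sum_(b.+1 <= j < k) E j)%N & Qz E * z b = Qz (upd E b) * g1.
Proof.
move=> hb; rewrite /Qz !(big_cat_nat _ (n := b.+1) (m := 0) (p := k)) //=.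
exists ((\prod_(b.+1 <= j < k) z j ^+ E j) ^ z b); first by apply: wk_conj => //; apply: wk_prod.
set Q2 := \prod_(b.+1 <= j < k) z j ^+ E j.
rewrite -mulgA (conjgC Q2 (z b)) mulgA; congr (_ * _).
rewrite [X in _ = _ * X]big1_seq ?mulg1; last first.
  move=> j /andP[_]; rewrite mem_index_iota => /andP[h1 _].
  by rewrite /upd ltnNge (ltnW h1) /= gtn_eqF // expg0.
rewrite !big_nat_recr //= -mulgA -expgSr /upd ltnn eqxx; congr (_ * _).
by apply: eq_big_nat => j /andP[_ ->].
Qed.

Definition Phi L (E : nat -> nat) := (\sum_(0 <= j < k) E j * L.+1 ^ (k - j))%N.

Lemma sum_le_pow (E : nat -> nat) L a c e :
  (forall j, a <= j < c -> k - j <= e) ->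
  (\sum_(a <= j < c) E j * L.+1 ^ (k - j) <= (\sum_(a <= j < c) E j) * L.+1 ^ e)%N.
Proof.
move=> H; rewrite big_distrl /= big_nat_cond [X in _ <= X]big_nat_cond.
apply: leq_sum => j /andP[hj _].
by rewrite leq_mul2l leq_pexp2l ?H ?orbT.
Qed.

Lemma Phi_le L E : (Phi L E <= (\sum_(0 <= j < k) E j) * L.+1 ^ k)%N.
Proof. by apply: sum_le_pow => j _; apply: leq_subr. Qed.

Lemma Phi_upd L E b : b < k -> (\sum_(0 <= j < k) E j <= L)%N -> Phi L E < Phi L (upd E b).
Proof.
move=> hb hL; rewrite /Phi !(big_cat_nat _ (n := b.+1) (m := 0) (p := k)) //=.
rewrite !big_nat_recr //= [X in _ < _ + X]big1_seq; last first.
  move=> j /andP[_]; rewrite mem_index_iota => /andP[h1 _].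
  by rewrite /upd ltnNge (ltnW h1) /= gtn_eqF.
rewrite /upd ltnn eqxx.
have -> : (\sum_(0 <= i < b) (if i < b then E i else if i == b then (E b).+1 else 0) * L.+1 ^ (k - i)
   = \sum_(0 <= i < b) E i * L.+1 ^ (k - i))%N.
  by apply: eq_big_nat => i /andP[_ ->].
have h1 := @sum_le_pow E L b.+1 k (k - b.+1) (fun j hj => leq_sub2l _ (proj1 (andP hj))).
have h2 : (\sum_(b.+1 <= j < k) E j <= L)%N.
  apply: leq_trans hL; rewrite (big_cat_nat _ (n := b.+1) (m := 0) (p := k)) //=; exact: leq_addl.
have h3 : (L.+1 ^ (k - b) = L.+1 * L.+1 ^ (k - b.+1))%N by rewrite -expnS subnSK.
have h4 : (\sum_(b.+1 <= i < k) E i * L.+1 ^ (k - i) < L.+1 ^ (k - b))%N.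
  rewrite h3; apply: leq_ltn_trans h1 _.
  rewrite ltn_mul2r expn_gt0 /=; exact: h2.
rewrite mulSn; lia.
Qed.

Lemma sum_split (E : nat -> nat) b : b < k ->
  (\sum_(0 <= j < k) E j = \sum_(0 <= j < b) E j + E b + \sum_(b.+1 <= j < k) E j)%N.
Proof. by move=> hb; rewrite (big_cat_nat _ (n := b.+1) (m := 0) (p := k)) //= big_nat_recr. Qed.

Lemma sum_upd E b : b < k ->
  (\sum_(0 <= j < k) upd E b j = \sum_(0 <= j < b) E j + (E b).+1)%N.
Proof.
move=> hb; rewrite (@sum_split _ b hb) [X in (_ + X = _)%N]big1_seq ?addn0; last first.
  move=> j /andP[_]; rewrite mem_index_iota => /andP[h1 _].
  by rewrite /upd ltnNge (ltnW h1) /= gtn_eqF.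
rewrite /upd ltnn eqxx; congr (_ + _)%N.
by apply: eq_big_nat => i /andP[_ ->].
Qed.

Lemma sort_class E s : all (fun t => t < k) s -> exists E', Qz E * pw s = Qz E'.
Proof.
pose L := (\sum_(0 <= j < k) E j + size s)%N.
suff H : forall F E s, all (fun t => t < k) s -> (\sum_(0 <= j < k) E j + size s)%N = L ->
   (L * L.+1 ^ k - Phi L E <= F)%N -> exists E', Qz E * pw s = Qz E'.
  by move=> a; apply: (H _ E s a erefl (leqnn _)).
clearbody L; clear E s; move=> F; elim: F => [|F IH] E [|b s] a hL hF; try by exists E; rewrite /pw big_nil mulg1.
all: case/andP: a => hb a.
all: have [g1 [s1 [hs1 a1 ->]] e1] := @step E b hb.
all: have hE : (\sum_(0 <= j < k) E j <= L)%N by rewrite -hL leq_addr.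
all: have hU := @Phi_upd L E b hb hE.
all: have hS := @sum_upd E b hb; have hS2 := @sum_split E b hb.
all: have hL2 : (\sum_(0 <= j < k) upd E b j + size (s1 ++ s) = L)%N
       by rewrite size_cat hs1 -hL hS hS2 /=; lia.
all: have hP := Phi_le L (upd E b).
all: have hP2 : ((\sum_(0 <= j < k) upd E b j) * L.+1 ^ k <= L * L.+1 ^ k)%N
       by rewrite leq_mul2r -hL2 leq_addr orbT.
- lia.
have [E' eE'] : exists E', Qz (upd E b) * pw (s1 ++ s) = Qz E'.
  apply: (IH _ _ _ hL2); first by rewrite all_cat; apply/andP; split.
  lia.
exists E'; rewrite -eE' /pw big_cons mulgA e1 -mulgA; congr (_ * _).
by rewrite big_cat.
Qed.
End Word.

Section CG.
Variables (G : groupType) (m : nat) (n : 'I_m -> nat) (y : forall i : 'I_m, 'I_(n i) -> G).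
Hypothesis Hconj : forall i j (g : G), exists j', y i j ^ g = y i j'.

Definition Nn (i : nat) : nat := if (insub i : option 'I_m) is Some o then n o else 0.
Definition Y (i j : nat) : G :=
  if (insub i : option 'I_m) is Some o then
    (if (insub j : option 'I_(n o)) is Some o' then y o o' else 1) else 1.

Lemma NE (i : 'I_m) : Nn i = n i.
Proof. by rewrite /Nn valK. Qed.

Lemma YE (i : 'I_m) (j : 'I_(n i)) : Y i j = y i j.
Proof. by rewrite /Y valK valK. Qed.

Lemma Yconj i j i' j' : i < m -> j < Nn i -> i' < m -> j' < Nn i' ->
  exists2 j'', j'' < Nn i & Y i j ^ Y i' j' = Y i j''.
Proof.
move=> hi hj hi' hj'.
pose o := Ordinal hi; pose o' := Ordinal hi'.
have hj2 : j < n o by rewrite -NE.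
have hj2' : j' < n o' by rewrite -NE.
have -> : Y i j = y o (Ordinal hj2) by rewrite -YE.
have -> : Y i' j' = y o' (Ordinal hj2') by rewrite -YE.
case: (Hconj o (Ordinal hj2) (y o' (Ordinal hj2'))) => j'' ->.
exists j''; first by rewrite -[i]/(val o) NE.
by rewrite -[i]/(val o) YE.
Qed.

Definition valid a (l : nat * nat) := [&& a <= l.1, l.1 < m & l.2 < Nn l.1].
Definition pwY (w : seq (nat * nat)) := \prod_(l <- w) Y l.1 l.2.
Definition wf a g := exists w, all (valid a) w /\ g = pwY w.
Definition Qc i E := Qz G (Nn i) (Y i) E.
Definition NFn (e : nat -> nat -> nat) := \prod_(0 <= i < m) Qc i (e i).

Lemma wf1 a : wf a 1. Proof. by exists [::]; rewrite /pwY big_nil. Qed.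
Lemma wfM a g1 g2 : wf a g1 -> wf a g2 -> wf a (g1 * g2).
Proof.
case=> w1 [a1 ->] [w2 [a2 ->]]; exists (w1 ++ w2).
by rewrite all_cat a1 a2 /pwY big_cat.
Qed.
Lemma wfY a i j : valid a (i, j) -> wf a (Y i j).
Proof. by move=> v; exists [:: (i, j)]; rewrite /= v /pwY big_seq1. Qed.
Lemma wfX a i j e : valid a (i, j) -> wf a (Y i j ^+ e).
Proof.
move=> v; elim: e => [|e IH]; first by rewrite expg0; apply: wf1.
by rewrite expgS; apply: wfM => //; apply: wfY.
Qed.
Lemma wf_Qc a i E : a <= i -> i < m -> wf a (Qc i E).
Proof.
move=> ha hi; rewrite /Qc /Qz big_nat_cond; apply: big_ind => //.
- exact: wf1.
- exact: wfM.
move=> j /andP[/andP[_ hj] _]; apply: wfX; by rewrite /valid /= ha hi hj.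
Qed.
Lemma wf_prod a b e : a <= b -> wf a (\prod_(b <= i < m) Qc i (e i)).
Proof.
move=> hab; rewrite big_nat_cond; apply: big_ind => //.
- exact: wf1.
- exact: wfM.
move=> i /andP[/andP[h1 h2] _]; apply: wf_Qc => //; exact: leq_trans h1.
Qed.
Lemma wf_conj a g i' j' : i' < m -> j' < Nn i' -> wf a g -> wf a (g ^ Y i' j').
Proof.
move=> hi' hj' [w [aw ->]]; elim: w aw => [|l w IH] /=.
  by move=> _; rewrite /pwY big_nil conj1g; apply: wf1.
case/andP=> v aw; rewrite /pwY big_cons conjMg; apply: wfM; last exact: IH.
case/and3P: v => h1 h2 h3.
case: (@Yconj _ _ _ _ h2 h3 hi' hj') => j'' hj'' ->; apply: wfY.
by rewrite /valid /= h1 h2 hj''.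
Qed.

Lemma word_from a (H : forall i b e, a <= i -> i < m -> b < Nn i -> exists e', NFn e * Y i b = NFn e') :
  forall w e, all (valid a) w -> exists e', NFn e * pwY w = NFn e'.
Proof.
elim=> [|l w IH] e /=; first by exists e; rewrite /pwY big_nil mulg1.
case/andP=> /and3P[h1 h2 h3] aw.
have [e1 he1] := H _ _ e h1 h2 h3.
have [e2 he2] := IH e1 aw.
by exists e2; rewrite /pwY big_cons mulgA he1.
Qed.

Lemma Qc0 i : Qc i (fun _ => 0) = 1.
Proof. by rewrite /Qc /Qz big1 // => j _; rewrite expg0. Qed.

Lemma SL d : forall i b e, m - i <= d -> i < m -> b < Nn i -> exists e', NFn e * Y i b = NFn e'.
Proof.
elim: d => [|d IHd] i b e hd hi hb; first by lia.
have Hz : forall j t, j < Nn i -> t < Nn i -> exists2 j', j' < Nn i & Y i j ^ Y i t = Y i j'.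
  by move=> j t hj ht; apply: Yconj.
have [E' hE'] : exists E', Qz G (Nn i) (Y i) (e i) * pw G (Y i) [:: b] = Qz G (Nn i) (Y i) E'.
  by apply: sort_class => //; rewrite /= hb.
rewrite /pw big_seq1 in hE'.
set P := \prod_(0 <= i0 < i) Qc i0 (e i0).
set T := \prod_(i.+1 <= i0 < m) Qc i0 (e i0).
have -> : NFn e = P * Qc i (e i) * T.
  by rewrite /NFn (big_cat_nat _ (n := i.+1) (m := 0) (p := m)) //= big_nat_recr.
have [w [aw ew]] : wf i.+1 (T ^ Y i b) by apply: wf_conj => //; apply: wf_prod.
pose e'' := fun i' => if i' < i then e i' else if i' == i then E' else (fun _ : nat => 0).
have eN : NFn e'' = P * Qc i E'.
  rewrite /NFn (big_cat_nat _ (n := i.+1) (m := 0) (p := m)) //= big_nat_recr //=.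
  rewrite [X in _ * X = _]big1_seq ?mulg1; last first.
    move=> j /andP[_]; rewrite mem_index_iota => /andP[h1 _].
    by rewrite /e'' ltnNge (ltnW h1) /= gtn_eqF // Qc0.
  rewrite /e'' ltnn eqxx; congr (_ * _).
  by apply: eq_big_nat => j /andP[_ ->].
have [e' he'] := @word_from i.+1 (fun i' b' e0 h1 h2 h3 => IHd i' b' e0 ltac:(lia) h2 h3) w e'' aw.
exists e'; rewrite -he' -ew eN -!mulgA (conjgC T (Y i b)) (mulgA (Qc i (e i))).
by congr (_ * (_ * _)); exact: hE'.
Qed.

Lemma NF_word w e : all (valid 0) w -> exists e', NFn e * pwY w = NFn e'.
Proof. apply: word_from => i b e0 _ hi hb; apply: (@SL m) => //; exact: leq_subr. Qed.
End CG.

Lemma centralM (G : groupType) (a b : G) : central a -> central b -> central (a * b).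
Proof. by move=> ha hb g; rewrite -mulgA (hb g) mulgA (ha g) -mulgA. Qed.
Lemma centralV (G : groupType) (a : G) : central a -> central a^-1.
Proof. by move=> ha g; rewrite -{1}(mulgK a g) -(ha g) mulgA mulKg. Qed.
Lemma centralX (G : groupType) (a : G) k : central a -> central (a ^+ k).
Proof.
move=> ha; elim: k => [|k IH]; first by move=> g; rewrite expg0 mul1g mulg1.
by rewrite expgS; apply: centralM.
Qed.
Lemma central1 (G : groupType) : central (1 : G).
Proof. by move=> g; rewrite mul1g mulg1. Qed.
Lemma central_conj (G : groupType) (a g : G) : central a -> a ^ g = a.
Proof. by move=> ha; rewrite conjgE ha mulKg. Qed.

Lemma prod_cm (G : groupType) (F : nat -> G) (h : G) (c : nat -> nat) K : central h ->
  \prod_(0 <= j < K) (F j * h ^+ c j) = \prod_(0 <= j < K) F j * h ^+ (\sum_(0 <= j < K) c j)%N.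
Proof.
move=> ch; elim: K => [|K IH]; first by rewrite !big_geq // expg0 mulg1.
rewrite !big_nat_recr //= IH expgnDr.
rewrite -!mulgA; congr (_ * _); rewrite !mulgA; congr (_ * _).
by rewrite (@centralX _ _ _ ch).
Qed.

Definition zg : Type := int.
HB.instance Definition _ := Choice.on zg.
Definition zmul (a b : zg) : zg := (a + b)%R.
Definition zinv (a : zg) : zg := (- a)%R.
Definition zone : zg := 0%R.
Lemma zA : associative zmul. Proof. move=> a b c; exact: GRing.addrA. Qed.
Lemma z1 : left_id zone zmul. Proof. move=> a; exact: GRing.add0r. Qed.
Lemma z1r : right_id zone zmul. Proof. move=> a; exact: GRing.addr0. Qed.
Lemma zV : left_inverse zone zinv zmul. Proof. move=> a; exact: GRing.addNr. Qed.
Lemma zVr : right_inverse zone zinv zmul. Proof. move=> a; exact: GRing.addrN. Qed.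
HB.instance Definition _ := isGroup.Build zg zA z1 z1r zV zVr.

Lemma zg_conj (a b : zg) : a ^ b = a.
Proof.
rewrite conjgE; change (@eq int (- b + (a + b))%R a).
by rewrite GRing.addrCA GRing.addNr GRing.addr0.
Qed.

Section CG2.
Variables (G : groupType) (m : nat) (n : 'I_m -> nat) (y : forall i : 'I_m, 'I_(n i) -> G) (p : 'I_m -> nat).
Hypothesis Hn : forall i, 0 < n i.
Hypothesis Hconj : forall i j (g : G), exists j', y i j ^ g = y i j'.
Hypothesis Hclass : forall i1 j1 i2 j2, (exists g : G, y i2 j2 = y i1 j1 ^ g) <-> i1 = i2.
Hypothesis Hp : forall i j, 0 < p i /\ central (y i j ^+ p i) /\
              (forall q, 0 < q -> q < p i -> ~ central (y i j ^+ q)).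

Local Notation Y := (Y G m n y).
Local Notation Nn := (Nn m n).
Local Notation NFn := (NFn G m n y).

Definition Pn (i : nat) : nat := if (insub i : option 'I_m) is Some o then p o else 0.
Definition Hh (i : nat) : G := Y i 0 ^+ Pn i.

Lemma PE (i : 'I_m) : Pn i = p i. Proof. by rewrite /Pn valK. Qed.

Lemma Y0E (i : 'I_m) : Y i 0 = y i (Ordinal (Hn i)).
Proof. by rewrite -YE. Qed.

Lemma Hh_central i : central (Hh i).
Proof.
rewrite /Hh /Pn /Y; case: insubP => [o _ _|_]; last by rewrite expg1n; apply: central1.
case: insubP => [o' _ _|]; first by case: (Hp o o') => _ [].
by rewrite /= (Hn o).
Qed.

Lemma YpowH i j : i < m -> j < Nn i -> Y i j ^+ Pn i = Hh i.
Proof.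
move=> hi hj; pose o := Ordinal hi.
have hj2 : j < n o by rewrite -(@NE m n o).
rewrite /Hh -[i]/(val o) PE Y0E.
have -> : Y o j = y o (Ordinal hj2) by rewrite -YE.
case: (proj2 (Hclass o (Ordinal (Hn o)) o (Ordinal hj2)) erefl) => g ->.
by rewrite -conjXg central_conj //; case: (Hp o (Ordinal (Hn o))) => _ [].
Qed.

Definition Zc (u v : nat -> nat) : G := \prod_(0 <= i < m) (Hh i ^+ u i * (Hh i ^+ v i)^-1).

Lemma Zc_central u v : central (Zc u v).
Proof.
rewrite /Zc; apply: big_ind; first exact: central1; first exact: centralM.
move=> i _; apply: centralM; first exact: centralX (Hh_central i).
by apply: centralV; apply: centralX (Hh_central i).
Qed.

Definition incv (v : nat -> nat) i := fun j => if j == i then (v j).+1 else v j.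

Lemma Zc_inc u v i : i < m -> Zc u v * (Hh i)^-1 = Zc u (incv v i).
Proof.
move=> hi; rewrite /Zc !(big_cat_nat _ (n := i.+1) (m := 0) (p := m)) //= !big_nat_recr //=.
rewrite /incv eqxx.
have e1 : \prod_(0 <= j < i) (Hh j ^+ u j * (Hh j ^+ v j)^-1)
   = \prod_(0 <= j < i) (Hh j ^+ u j * (Hh j ^+ (if j == i then (v j).+1 else v j))^-1).
  by apply: eq_big_nat => j /andP[_ hj]; rewrite ltn_eqF.
have e2 : \prod_(i.+1 <= j < m) (Hh j ^+ u j * (Hh j ^+ v j)^-1)
   = \prod_(i.+1 <= j < m) (Hh j ^+ u j * (Hh j ^+ (if j == i then (v j).+1 else v j))^-1).
  by apply: eq_big_nat => j /andP[hj _]; rewrite gtn_eqF.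
rewrite -e1 -e2.
set B := \prod_(i.+1 <= j < m) _.
have cB : central B.
  rewrite /B; apply: big_ind; first exact: central1; first exact: centralM.
  move=> j _; apply: centralM; first exact: centralX (Hh_central j).
  by apply: centralV; apply: centralX (Hh_central j).
rewrite -mulgA (cB (Hh i)^-1) mulgA; congr (_ * _).
by rewrite -!mulgA expgS invgM.
Qed.

Hypothesis HCgen : forall g : G, in_generated (fun x => exists i j, x = y i j) g.

Definition Rg g := forall e u v, exists e' u' v', NFn e * Zc u v * g = NFn e' * Zc u' v'.

Lemma Rg1 : Rg 1.
Proof. by move=> e u v; exists e, u, v; rewrite mulg1. Qed.

Lemma RgM g1 g2 : Rg g1 -> Rg g2 -> Rg (g1 * g2).
Proof.
move=> h1 h2 e u v; have [e1 [u1 [v1 E1]]] := h1 e u v.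
have [e2 [u2 [v2 E2]]] := h2 e1 u1 v1.
by exists e2, u2, v2; rewrite mulgA E1 E2.
Qed.

Lemma RgX g k : Rg g -> Rg (g ^+ k).
Proof.
move=> h; elim: k => [|k IH]; first by rewrite expg0; apply: Rg1.
by rewrite expgS; apply: RgM.
Qed.

Lemma RgY i j : i < m -> j < Nn i -> Rg (Y i j).
Proof.
move=> hi hj e u v.
have [e' he'] : exists e', NFn e * Y i j = NFn e'.
  have := @NF_word G m n y Hconj [:: (i, j)] e; rewrite /pwY big_seq1 /=.
  by apply; rewrite /valid /= hi hj.
exists e', u, v.
by rewrite -mulgA (Zc_central u v (Y i j)) mulgA he'.
Qed.

Lemma RgHV i : i < m -> Rg (Hh i)^-1.
Proof. by move=> hi e u v; exists e, u, (incv v i); rewrite -mulgA Zc_inc. Qed.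

Lemma Pn_gt0 i : i < m -> 0 < Pn i.
Proof.
by move=> hi; rewrite -[i]/(val (Ordinal hi)) PE; case: (Hp (Ordinal hi) (Ordinal (Hn (Ordinal hi)))).
Qed.

Lemma RgYV i j : i < m -> j < Nn i -> Rg (Y i j)^-1.
Proof.
move=> hi hj.
have -> : (Y i j)^-1 = Y i j ^+ (Pn i).-1 * (Hh i)^-1.
  rewrite -(@YpowH i j hi hj) -(prednK (@Pn_gt0 i hi)) expgS /= invgM.
  by rewrite mulVKg.
by apply: RgM; [apply: RgX; apply: RgY | apply: RgHV].
Qed.

Lemma all_Rg g : Rg g.
Proof.
suff [] : Rg g /\ Rg g^-1 by [].
apply: (HCgen g (fun g => Rg g /\ Rg g^-1)).
- split; first by split; rewrite ?invg1; apply: Rg1.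
  move=> x z [hx hx'] [hz hz']; split; first exact: RgM.
  by rewrite invgM invgK; apply: RgM.
move=> x [i [j ->]]; rewrite -YE; split; first by apply: RgY; rewrite ?NE.
by apply: RgYV; rewrite ?NE.
Qed.

Lemma NF0 : NFn (fun _ _ => 0) = 1.
Proof. by rewrite /NFn big1 // => i _; apply: Qc0. Qed.

Lemma Zc00 : Zc (fun _ => 0) (fun _ => 0) = 1.
Proof. by rewrite /Zc big1 // => i _; rewrite !expg0 invg1 mulg1. Qed.

Lemma decomp g : exists e u v, g = NFn e * Zc u v.
Proof.
have [e [u [v E]]] := all_Rg g (fun _ _ => 0) (fun _ => 0) (fun _ => 0).
by exists e, u, v; rewrite -E NF0 Zc00 !mul1g.
Qed.

Lemma Nn_gt0 i : i < m -> 0 < Nn i.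
Proof. by move=> hi; rewrite -[i]/(val (Ordinal hi)) NE. Qed.

Definition Af i (E : nat -> nat) j := ((E j + (Pn i).-1) %% Pn i).+1.
Definition kf i (E : nat -> nat) u v := (\sum_(0 <= j < Nn i) ((E j + (Pn i).-1) %/ Pn i) + u - v)%N.

Lemma regroup i E u v : i < m -> (\sum_(0 <= j < Nn i) E j + u * Pn i = v * Pn i)%N ->
  [/\ kf i E u v < Nn i, forall j, j < Nn i -> 0 < Af i E j <= Pn i,
     (\sum_(0 <= j < Nn i) Af i E j + kf i E u v * Pn i = Nn i * Pn i)%N &
     Hh i ^+ u * (Hh i ^+ v)^-1 * Qc G m n y i E = (Hh i ^+ Nn i)^-1 * Hh i ^+ kf i E u v * Qc G m n y i (Af i E)].
Proof.
move=> hi hE.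
have hP := @Pn_gt0 i hi; have hN := @Nn_gt0 i hi.
pose A := fun j => ((E j + (Pn i).-1) %% Pn i).+1.
pose q := fun j => ((E j + (Pn i).-1) %/ Pn i).
have eAq : forall j, (A j + Pn i * q j = E j + Pn i)%N.
  move=> j; have := divn_eq (E j + (Pn i).-1) (Pn i); rewrite /A /q; lia.
have hA : forall j, j < Nn i -> 0 < A j <= Pn i.
  by move=> j _; rewrite /A /= ltn_pmod.
have eQ : Qc G m n y i E * Hh i ^+ Nn i = Qc G m n y i A * Hh i ^+ (\sum_(0 <= j < Nn i) q j)%N.
  have e1 : Qc G m n y i E * Hh i ^+ Nn i = \prod_(0 <= j < Nn i) (Y i j ^+ E j * Hh i ^+ 1).
    by rewrite prod_cm ?sum_nat_const_nat ?subn0 ?muln1 //; apply: Hh_central.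
  have e2 : Qc G m n y i A * Hh i ^+ (\sum_(0 <= j < Nn i) q j)%N
      = \prod_(0 <= j < Nn i) (Y i j ^+ A j * Hh i ^+ q j).
    by rewrite prod_cm //; apply: Hh_central.
  rewrite e1 e2; apply: eq_big_nat => j0 /andP[_ hj].
  by rewrite expg1 -(@YpowH i j0 hi hj) -expgnDr -eAq expgnDr expgnA (@YpowH i j0 hi hj).
have eS : (\sum_(0 <= j < Nn i) A j + Pn i * \sum_(0 <= j < Nn i) q j
           = \sum_(0 <= j < Nn i) E j + Nn i * Pn i)%N.
  rewrite big_distrr /= -big_split /=.
  rewrite (eq_big_nat _ _ (F2 := fun j => E j + Pn i)%N); last by move=> j _; apply: eAq.
  by rewrite big_split /= sum_nat_const_nat subn0.
have s1 : (Nn i <= \sum_(0 <= j < Nn i) A j)%N.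
  have e3 : Nn i = (\sum_(0 <= j < Nn i) 1)%N by rewrite sum_nat_const_nat subn0 muln1.
  rewrite [X in (X <= _)%N]e3 big_nat_cond [X in (_ <= X)%N]big_nat_cond.
  by apply: leq_sum => j1 /andP[/andP[_ hj1] _]; case/andP: (hA j1 hj1).
have s2 : (\sum_(0 <= j < Nn i) A j <= Nn i * Pn i)%N.
  rewrite -[X in (_ <= X * _)%N]subn0 -sum_nat_const_nat big_nat_cond [X in (_ <= X)%N]big_nat_cond.
  by apply: leq_sum => j1 /andP[/andP[_ hj1] _]; case/andP: (hA j1 hj1).
set sA := (\sum_(0 <= j < Nn i) A j)%N in eS s1 s2.
set sE := (\sum_(0 <= j < Nn i) E j)%N in eS hE.
set Q := (\sum_(0 <= j < Nn i) q j)%N in eS eQ.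
have -> : kf i E u v = (Q + u - v)%N by [].
change (Af i E) with A.
split => //.
- nia.
- nia.
have ekv : (v + (Q + u - v) = Q + u)%N by nia.
set k := (Q + u - v)%N in ekv *.
set h := Hh i in eQ *; set X := Qc G m n y i A in eQ *.
have ch : central h by apply: Hh_central.
have cX : forall t, central (h ^+ t) by move=> t; apply: centralX.
have cXV : forall t, central (h ^+ t)^-1 by move=> t; apply: centralV; apply: cX.
have -> : Qc G m n y i E = X * h ^+ Q * (h ^+ Nn i)^-1 by rewrite -eQ mulgK.
rewrite -[RHS]mulgA (cXV (Nn i) (h ^+ k * X)) (cX k X).
rewrite (@centralM _ _ _ (cX u) (cXV v)) -!mulgA; congr (_ * _).
rewrite (cXV (Nn i) (h ^+ u * (h ^+ v)^-1)) mulgA; congr (_ * _).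
rewrite mulgA -expgnDr -ekv expgnDr -mulgA (cX k (h ^+ v)^-1).
by rewrite mulVKg.
Qed.


Hypothesis Hinj : forall i1 j1 i2 j2, y i1 j1 = y i2 j2 -> i1 = i2 /\ nat_of_ord j1 = nat_of_ord j2.
Hypothesis HChom : forall (H : groupType) (f : G -> H),
      (forall i1 j1 i2 j2, f (y i1 j1 ^ y i2 j2) = f (y i1 j1) ^ f (y i2 j2)) ->
      exists phi : G -> H,
        (forall a b : G, phi (a * b) = phi a * phi b) /\
        (forall i j, phi (y i j) = f (y i j)).

Lemma deg_hom (i0 : 'I_m) : exists d : G -> zg, (forall a b, d (a * b) = d a * d b) /\
   (forall i j, d (y i j) = if i == i0 then (1%R : zg) else (0%R : zg)).
Proof.
pose f g : zg := if [exists j : 'I_(n i0), g == y i0 j] then 1%R else 0%R.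
have fy : forall i j, f (y i j) = if i == i0 then (1%R : zg) else (0%R : zg).
  move=> i j; rewrite /f; case: eqP => [e|ne].
    by subst i0; have -> : [exists j0, y i j == y i j0] by apply/existsP; exists j.
  case: existsP => // -[j' /eqP e]; case: ne; exact: (proj1 (Hinj _ _ _ _ e)).
have [phi [h1 h2]] : exists phi : G -> zg,
        (forall a b : G, phi (a * b) = phi a * phi b) /\ (forall i j, phi (y i j) = f (y i j)).
  apply: HChom => i1 j1 i2 j2; rewrite zg_conj.
  by case: (Hconj i1 j1 (y i2 j2)) => j' ->; rewrite !fy.
by exists phi; split => // i j; rewrite h2 fy.
Qed.

Section Deg.
Variable d : G -> zg.
Hypothesis dM : forall a b, d (a * b) = d a * d b.

Lemma d1 : d 1 = 1.
Proof. by apply: (mulgI (d 1)); rewrite -dM !mulg1. Qed.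
Lemma dV a : d a^-1 = (d a)^-1.
Proof. by apply: (mulgI (d a)); rewrite -dM !mulgV d1. Qed.
Lemma dcomm a b : d [~ a, b] = 1.
Proof. by rewrite /commg /conjg !dM !dV -conjgE zg_conj mulVg. Qed.
Lemma d_comm_sub g : in_commutator_subgroup g -> d g = 1.
Proof.
move=> hg; apply: (hg (fun g => d g = 1)).
  split; first exact: d1.
  by move=> x z hx hz; rewrite dM dV hx hz invg1 mulg1.
by move=> x [a [b ->]]; apply: dcomm.
Qed.
End Deg.

Section Deg2.
Variable d : G -> zg.
Hypothesis dM : forall a b, d (a * b) = d a * d b.
Variable i0 : 'I_m.
Hypothesis dy : forall i j, d (y i j) = if i == i0 then (1%R : zg) else (0%R : zg).

Lemma dX a k : (d (a ^+ k) : int) = ((d a : int) *+ k)%R.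
Proof.
elim: k => [|k IH]; first by rewrite expg0 (@d1 _ dM).
by rewrite expgS dM GRing.mulrS -IH.
Qed.

Lemma dprod (F : nat -> G) K : (d (\prod_(0 <= i < K) F i) : int) = (\sum_(0 <= i < K) (d (F i) : int))%R.
Proof.
elim: K => [|K IH]; first by rewrite !big_geq // (@d1 _ dM).
by rewrite !big_nat_recr //= dM -IH.
Qed.

Lemma dY i j : i < m -> j < Nn i -> (d (Y i j) : int) = if i == val i0 then 1%R else 0%R.
Proof.
move=> hi hj; pose o := Ordinal hi.
have hj2 : j < n o by rewrite -(@NE m n o).
have -> : Y i j = y o (Ordinal hj2) by rewrite -YE.
by rewrite dy.
Qed.

Lemma sum_single (F : nat -> int) : (forall i, i != val i0 -> F i = 0%R) ->
  (\sum_(0 <= i < m) F i)%R = F i0.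
Proof.
move=> hF; rewrite (big_cat_nat _ (n := i0.+1) (m := 0) (p := m)) //= big_nat_recr //=.
rewrite big1_seq; last by move=> i /andP[_]; rewrite mem_index_iota => /andP[_ h]; apply: hF; rewrite ltn_eqF.
rewrite [X in (_ + _ + X)%R]big1_seq ?GRing.addr0 ?GRing.add0r //.
by move=> i /andP[_]; rewrite mem_index_iota => /andP[h _]; apply: hF; rewrite gtn_eqF.
Qed.

Lemma dQc i E : i < m -> (d (Qc G m n y i E) : int) =
   if i == val i0 then ((\sum_(0 <= j < Nn i) E j)%N : int) else 0%R.
Proof.
move=> hi; rewrite /Qc /Qz dprod.
rewrite (eq_big_nat _ _ (F2 := fun j => (if i == val i0 then 1%R else 0%R) *+ E j)%R); last first.
  by move=> j /andP[_ hj]; rewrite dX dY.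
case: (i == val i0).
  elim: (Nn i) => [|K IH]; first by rewrite !big_geq.
  by rewrite !big_nat_recr //= IH natz PoszD.
by rewrite big1 // => j _; rewrite GRing.mul0rn.
Qed.

Lemma dNF e : (d (NFn e) : int) = (\sum_(0 <= j < Nn i0) e i0 j)%N.
Proof.
rewrite /NFn dprod (@sum_single (fun i => d (Qc G m n y i (e i)))).
  by rewrite dQc // eqxx.
by move=> i ne; case: (ltnP i m) => hi; [rewrite dQc // (negbTE ne) | rewrite /Qc /Qz /Nn insubN ?big_geq ?(@d1 _ dM) // -leqNgt].
Qed.

Lemma dHh i : i < m -> (d (Hh i) : int) = if i == val i0 then (Pn i : int) else 0%R.
Proof.
move=> hi; rewrite /Hh dX dY //; last exact: Nn_gt0.
by case: (i == val i0); rewrite ?natz ?GRing.mul0rn.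
Qed.

Lemma dZc u v : (d (Zc u v) : int) = (((u i0 * Pn i0)%N : int) - ((v i0 * Pn i0)%N : int))%R.
Proof.
rewrite /Zc dprod (@sum_single (fun i => d (Hh i ^+ u i * (Hh i ^+ v i)^-1))).
  rewrite dM (@dV _ dM) !dX dY ?eqxx //; last exact: Nn_gt0.
  by rewrite -!GRing.mulrnA !natz !(mulnC (Pn i0)).
move=> i ne; case: (ltnP i m) => hi.
  rewrite dM (@dV _ dM) !dX dY ?(negbTE ne) ?GRing.mul0rn //; last exact: Nn_gt0.
have -> : Hh i = 1 by rewrite /Hh /Pn insubN ?expg0 // -leqNgt.
by rewrite !expg1n invg1 mulg1 (@d1 _ dM).
Qed.
End Deg2.

Lemma merge (C F : nat -> G) K : (forall i, central (C i)) ->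
  \prod_(0 <= i < K) C i * \prod_(0 <= i < K) F i = \prod_(0 <= i < K) (C i * F i).
Proof.
move=> hC; elim: K => [|K IH]; first by rewrite !big_geq // mulg1.
rewrite !big_nat_recr //= -IH -!mulgA; congr (_ * _); rewrite !mulgA; congr (_ * _).
exact: hC.
Qed.

Lemma prod_ordE (F : nat -> G) (K : nat) : \prod_(i < K) F i = \prod_(0 <= i < K) F i.
Proof. by rewrite big_mkord. Qed.

Lemma main_form g : in_commutator_subgroup g ->
    exists (k : 'I_m -> nat) (a : forall i : 'I_m, 'I_(n i) -> nat),
      (forall i, k i < n i) /\
      (forall i j, 0 < a i j /\ a i j <= p i) /\
      (forall i, (\sum_(j < n i) a i j + k i * p i = n i * p i)%N) /\
      g = (canonical_element y p)^-1 *
          \prod_(i < m) (y i (Ordinal (Hn i)) ^+ (k i * p i) *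
                         \prod_(j < n i) y i j ^+ a i j).
Proof.
move=> hg; have [e [u [v ge]]] := decomp g.
have hdeg : forall i : 'I_m, (\sum_(0 <= j < Nn i) e i j + u i * Pn i = v i * Pn i)%N.
  move=> i0; have [d [dM dy]] := deg_hom i0.
  have h0 := @d_comm_sub d dM g hg.
  have H : (d (NFn e * Zc u v) : int) = 0%R by rewrite -ge h0.
  rewrite dM in H.
  have H2 : ((d (NFn e) : int) + (d (Zc u v) : int) = 0)%R := H.
  rewrite (@dNF d dM i0 dy e) (@dZc d dM i0 dy u v) in H2; lia.
have R : forall i : 'I_m, _ := fun i => @regroup i (e i) (u i) (v i) (ltn_ord i) (hdeg i).
exists (fun i => kf i (e i) (u i) (v i)), (fun i j => Af i (e i) j).
split; [|split; [|split]].
- by move=> i; case: (R i); rewrite NE.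
- by move=> i j; case: (R i) => _ h _ _; rewrite -PE; apply/andP; apply: h; rewrite NE.
- move=> i; case: (R i) => _ _ h _; rewrite -PE -NE -h; congr (_ + _)%N.
  by rewrite -(big_mkord xpredT (fun j => Af i (e i) j)) NE.
have ec : canonical_element y p = \prod_(0 <= i < m) Hh i ^+ Nn i.
  rewrite /canonical_element (big_mkord xpredT (fun i => Hh i ^+ Nn i)).
  apply: eq_bigr => i _.
  rewrite (eq_bigr (fun _ => Hh i)); last first.
    by move=> j _; rewrite -YE -PE YpowH // NE.
  by rewrite big_const_ord iter_mulg_1 NE.
have eR : \prod_(i < m) (y i (Ordinal (Hn i)) ^+ (kf i (e i) (u i) (v i) * p i) *
                         \prod_(j < n i) y i j ^+ Af i (e i) j)
        = \prod_(0 <= i < m) (Hh i ^+ kf i (e i) (u i) (v i) * Qc G m n y i (Af i (e i))).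
  rewrite (big_mkord xpredT (fun i => Hh i ^+ kf i (e i) (u i) (v i) * Qc G m n y i (Af i (e i)))).
  apply: eq_bigr => i _; congr (_ * _).
    by rewrite /Hh Y0E PE -expgnA mulnC.
  rewrite /Qc /Qz NE (big_mkord xpredT (fun j => Y i j ^+ Af i (e i) j)).
  by apply: eq_bigr => j _; rewrite YE.
rewrite eR ec ge; apply: (mulgI (\prod_(0 <= i < m) Hh i ^+ Nn i)); rewrite mulVKg.
rewrite -(Zc_central u v (NFn e)) /Zc /NFn merge; last first.
  move=> i; apply: centralM; first exact: centralX (Hh_central i).
  by apply: centralV; apply: centralX (Hh_central i).
rewrite merge; last by move=> i; apply: centralX (Hh_central i).
apply: eq_big_nat => i /andP[_ hi].
case: (R (Ordinal hi)) => _ _ _; rewrite /= => ->.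
by rewrite !mulgA mulgV mul1g.
Qed.


Definition MX := (\big[maxn/0%N]_(i < m) n i).+1.
Definition PX := (\big[maxn/0%N]_(i < m) p i).+1.
Definition form (K : {ffun 'I_m -> 'I_MX}) (A : {ffun 'I_m -> {ffun 'I_MX -> 'I_PX}}) : G :=
  (canonical_element y p)^-1 *
  \prod_(i < m) (y i (Ordinal (Hn i)) ^+ (K i * p i) * \prod_(j < n i) y i j ^+ A i (inord j)).

Lemma fin_part : finite_subset (@in_commutator_subgroup G).
Proof.
exists [seq form K A | K <- enum {ffun 'I_m -> 'I_MX}, A <- enum {ffun 'I_m -> {ffun 'I_MX -> 'I_PX}}].
move=> g hg; have [k [a [hk [ha [_ ->]]]]] := @main_form g hg.
pose a' i (j : nat) := if (insub j : option 'I_(n i)) is Some o then a i o else 0.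
pose K0 : {ffun 'I_m -> 'I_MX} := [ffun i => inord (k i)].
pose A0 : {ffun 'I_m -> {ffun 'I_MX -> 'I_PX}} := [ffun i => [ffun j : 'I_MX => inord (a' i j)]].
have -> : (canonical_element y p)^-1 *
          \prod_(i < m) (y i (Ordinal (Hn i)) ^+ (k i * p i) * \prod_(j < n i) y i j ^+ a i j)
        = form K0 A0.
  rewrite /form; congr (_ * _); apply: eq_bigr => i _; congr (_ * _).
    rewrite /K0 ffunE inordK //; apply: leq_trans (hk i) _.
    by apply: leqW; exact: leq_bigmax.
  apply: eq_bigr => j _; rewrite /A0 !ffunE.
  have hj : (j < MX)%N.
    by rewrite /MX ltnS; apply: leq_trans (ltnW (ltn_ord j)) (@leq_bigmax _ _ i).
  rewrite (inordK hj) /a' valK inordK //.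
  by rewrite /PX ltnS; apply: leq_trans (proj2 (ha i j)) (@leq_bigmax _ _ i).
by apply: allpairs_f; rewrite mem_enum.
Qed.
End CG2.

Theorem proposition2p5 (G : groupType) (m : nat) (n : 'I_m -> nat)
    (y : forall i : 'I_m, 'I_(n i) -> G) (p : 'I_m -> nat)
    (* each class C_i = {y_{i,1},...,y_{i,n_i}} is nonempty *)
    (Hn : forall i, 0 < n i)
    (* the enumeration is injective *)
    (Hinj : forall i1 j1 i2 j2, y i1 j1 = y i2 j2 ->
              i1 = i2 /\ nat_of_ord j1 = nat_of_ord j2)
    (* 1 is not in Y *)
    (H1 : forall i j, y i j <> 1)
    (* Y is conjugation invariant, each C_i is closed under conjugation *)
    (Hconj : forall i j (g : G), exists j', y i j ^ g = y i j')
    (* elements of C_i1 and C_i2 are conjugate in G iff i1 = i2 *)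
    (Hclass : forall i1 j1 i2 j2,
              (exists g : G, y i2 j2 = y i1 j1 ^ g) <-> i1 = i2)
    (* (G, Y) is a C-group *)
    (HC : conj_presentation y)
    (* p_i is the least p >= 1 with y^p central, for y in C_i *)
    (Hp : forall i j, 0 < p i /\ central (y i j ^+ p i) /\
              (forall q, 0 < q -> q < p i -> ~ central (y i j ^+ q))) :
  finite_subset (@in_commutator_subgroup G) /\
  forall g : G, in_commutator_subgroup g ->
    exists (k : 'I_m -> nat) (a : forall i : 'I_m, 'I_(n i) -> nat),
      (forall i, k i < n i) /\
      (forall i j, 0 < a i j /\ a i j <= p i) /\
      (forall i, (\sum_(j < n i) a i j + k i * p i = n i * p i)%N) /\
      g = (canonical_element y p)^-1 *
          \prod_(i < m) (y i (Ordinal (Hn i)) ^+ (k i * p i) *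
                         \prod_(j < n i) y i j ^+ a i j).
Proof.
split.
- exact: (fin_part G m n y p Hn Hconj Hclass Hp (proj1 HC) Hinj (proj2 HC)).
- move=> g hg; exact: (main_form G m n y p Hn Hconj Hclass Hp (proj1 HC) Hinj (proj2 HC) g hg).
Qed.
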